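(* Let $G$ be a finite simple graph of order $n$ having no connected component of order less than $3$, and let $\mathcal{G}$ be an arbitrary Abelian group of order at least $2n$. Then there exists a labeling $f\colon E(G)\to\mathcal{G}$ such that $f(e)\neq 0$ for every edge $e$, the weighted degrees $w_f(v)$, $v\in V(G)$, are pairwise distinct, and $w_f(v)\neq 0$ for every vertex $v$.
   Context: For an Abelian group $\mathcal{G}$ (written additively, with identity $0$) and a labeling $f\colon E(G)\to\mathcal{G}$, the weighted degree (weight) of a vertex $v$ is $w_f(v)=\sum_{u\in N(v)} f(uv)$, the sum taken in $\mathcal{G}$. *)

(* Defs.v *)
From mathcomp Require Import all_boot all_algebra.
Set Implicit Arguments. Unset Strict Implicit. Unset Printing Implicit Defensive.
Import GRing.Theory.
Local Open Scope ring_scope.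

Definition simple_graph (T : finType) (e : rel T) : Prop :=
  irreflexive e /\ symmetric e.

Definition component (T : finType) (e : rel T) (x : T) : {set T} :=
  [set y | connect e x y].

(* An edge labeling is a function on unordered pairs {u,v} (as 2-element sets);
   only its values on edges matter. Weighted degree of v: sum over neighbours u
   of the label of the edge uv. *)
Definition wdeg (T : finType) (e : rel T) (G : zmodType)
  (f : {set T} -> G) (v : T) : G :=
  \sum_(u | e v u) f [set v; u].

(* Main.v *)
Require Import Defs.
From mathcomp Require Import all_boot all_algebra.
From mathcomp Require Import zify.
Set Implicit Arguments. Unset Strict Implicit. Unset Printing Implicit Defensive.
Import GRing.Theory.
Local Open Scope ring_scope.

Section Aux.
Variables (T : finType) (G : finZmodType).

Definition add_rel (h : rel T) (u v : T) : rel T :=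
  fun x y => h x y || ((x == u) && (y == v)) || ((x == v) && (y == u)).
Definition upd (f : {set T} -> G) (u v : T) (t : G) : {set T} -> G :=
  fun s => if s == [set u; v] then t else f s.

Lemma set2_eq (x y u v : T) : x != y -> [set x; y] = [set u; v] ->
  (x == u) && (y == v) || (x == v) && (y == u).
Proof.
move=> xy E.
have hx : x \in [set u; v] by rewrite -E set21.
have hy : y \in [set u; v] by rewrite -E set22.
move: hx hy; rewrite !inE.
case/orP=> /eqP hx; case/orP=> /eqP hy; subst; rewrite ?eqxx ?orbT //;
  by rewrite eqxx in xy.
Qed.

Lemma wdeg_add (h : rel T) f u v t z :
  symmetric h -> (forall x y, h x y -> x != y) -> u != v -> ~~ h u v ->
  wdeg (add_rel h u v) (upd f u v t) z
  = wdeg h f z + (if (z == u) || (z == v) then t else 0).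
Proof.
move=> hs hirr uv nh.
rewrite /wdeg !big_mkcond /=.
rewrite (eq_bigr (fun y => (if h z y then f [set z; y] else 0) +
   (if ((z == u) && (y == v)) || ((z == v) && (y == u)) then t else 0))); last first.
  move=> y _; rewrite /add_rel /upd.
  case hzy: (h z y) => /=.
    have nn : ((z == u) && (y == v)) || ((z == v) && (y == u)) = false.
      apply/negbTE; apply/negP => /orP[/andP[/eqP ? /eqP ?]|/andP[/eqP ? /eqP ?]]; subst.
        by rewrite hzy in nh.
      by rewrite hs hzy in nh.
    rewrite nn addr0; case: eqP => // E.
    by move: (set2_eq (hirr _ _ hzy) E); rewrite nn.
  rewrite add0r.
  case: ifP => // /orP[/andP[/eqP ? /eqP ?]|/andP[/eqP ? /eqP ?]]; subst;
    first by rewrite eqxx.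
  by rewrite setUC eqxx.
rewrite big_split /=; congr (_ + _); first by rewrite [RHS]big_mkcond.
case: (eqVneq z u) => [->|zu] /=.
  rewrite (negbTE uv) /=.
  rewrite (bigD1 v) //= eqxx big1 ?addr0 // => y /negbTE -> //.
case: (eqVneq z v) => [_|zv] /=.
  rewrite (bigD1 u) //= eqxx big1 ?addr0 // => y /negbTE -> //.
by rewrite big1.
Qed.

Lemma exists_notin (B : {set G}) : (#|B| < #|G|)%N -> exists t, t \notin B.
Proof.
move=> hB; case: (pickP [pred t | t \notin B]) => [t ht|H]; first by exists t.
have : [set: G] \subset B by apply/subsetP => x _; move: (H x) => /= /negbFE.
by move/subset_leq_card; rewrite cardsT leqNgt hB.
Qed.

Definition Bset (w : T -> G) u v : {set G} :=
  [set 0; - w u; - w v] :|: ([set w z - w u | z in ~: [set u; v]]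
                          :|: [set w z - w v | z in ~: [set u; v]]).

Lemma cardU_le (A B : {set G}) : (#|A :|: B| <= #|A| + #|B|)%N.
Proof. exact: (leq_card_setU A B).1. Qed.

Lemma Bset_card w u v : u != v -> (#|Bset w u v| <= 2 * #|T| - 1)%N.
Proof.
move=> uv.
have h3 : (#|[set (0%R : G); - w u; - w v]| <= 3)%N.
  apply: (leq_trans (cardU_le _ _)); rewrite cards1.
  by rewrite cards2; case: (_ != _).
have hc : (#|~: [set u; v]| = #|T| - 2)%N.
  by move: (cardsC [set u; v]); rewrite cards2 uv; lia.
have hT : (2 <= #|T|)%N.
  by move: (cardsC [set u; v]); rewrite cards2 uv; lia.
have i1 := leq_imset_card (fun z => w z - w u) (~: [set u; v]).
have i2 := leq_imset_card (fun z => w z - w v) (~: [set u; v]).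
rewrite /Bset; apply: (leq_trans (cardU_le _ _)).
apply: (leq_trans (leq_add h3 (cardU_le _ _))).
move: i1 i2; rewrite hc => i1 i2; apply: (leq_trans (leq_add (leqnn 3) (leq_add i1 i2))); lia.
Qed.

Lemma notinB w u v t : t \notin Bset w u v ->
  [/\ t != 0, w u + t != 0, w v + t != 0,
      forall z, z != u -> z != v -> w u + t != w z
    & forall z, z != u -> z != v -> w v + t != w z].
Proof.
move=> hB.
have zC z : z != u -> z != v -> z \in ~: [set u; v].
  by move=> zu zv; rewrite !inE negb_or zu zv.
split.
- by apply: contra hB => /eqP ->; rewrite !inE eqxx.
- apply: contra hB => /eqP E; rewrite !inE.
  by rewrite -(addKr (w u) t) E addr0 eqxx orbT.
- apply: contra hB => /eqP E; rewrite !inE.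
  by rewrite -(addKr (w v) t) E addr0 eqxx !orbT.
- move=> z zu zv; apply: contra hB => /eqP E.
  rewrite !inE; apply/orP; right; apply/orP; left.
  apply/imsetP; exists z; first exact: zC.
  by rewrite -E addrC addKr.
- move=> z zu zv; apply: contra hB => /eqP E.
  rewrite !inE; apply/orP; right; apply/orP; right.
  apply/imsetP; exists z; first exact: zC.
  by rewrite -E addrC addKr.
Qed.

Lemma step_ok (w : T -> G) u v t (S : {set T}) :
  u != v -> w u != w v ->
  (forall x y, x \in S -> y \in S -> x != u -> x != v -> y != u -> y != v ->
     w x = w y -> x = y) ->
  (forall x, x \in S -> x != u -> x != v -> w x != 0) ->
  t \notin Bset w u v ->
  let w' := fun z => w z + (if (z == u) || (z == v) then t else 0) in
  (forall x y, x \in S -> y \in S -> w' x = w' y -> x = y) /\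
  (forall x, x \in S -> w' x != 0).
Proof.
move=> uv wuv Hi Hn /notinB [t0 hu hv hzu hzv] w'.
have W z : w' z = if z == u then w u + t else if z == v then w v + t else w z.
  rewrite /w'; case: (eqVneq z u) => [->|zu] //=.
  by case: (eqVneq z v) => [->|zv] //=; rewrite addr0.
split.
  move=> x y xS yS; rewrite !W.
  case: (eqVneq x u) => [->|xu]; case: (eqVneq y u) => [->|yu] //.
  - case: (eqVneq y v) => [->|yv].
      by move/addIr => E; rewrite E eqxx in wuv.
    by move=> E; move: (hzu y yu yv); rewrite E eqxx.
  - case: (eqVneq x v) => [->|xv].
      by move/addIr => E; rewrite E eqxx in wuv.
    by move=> E; move: (hzu x xu xv); rewrite E eqxx.
  - case: (eqVneq x v) => [->|xv]; case: (eqVneq y v) => [->|yv] //.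
    + by move=> E; move: (hzv y yu yv); rewrite E eqxx.
    + by move=> E; move: (hzv x xu xv); rewrite E eqxx.
    + exact: Hi.
move=> x xS; rewrite W.
case: (eqVneq x u) => [_|xu] //; case: (eqVneq x v) => [_|xv] //.
exact: Hn.
Qed.
End Aux.

Section Main.
Variables (T : finType) (G : finZmodType) (e : rel T).
Hypotheses (eirr : irreflexive e) (esym : symmetric e)
  (HG : (2 * #|T| <= #|G|)%N) (Hcomp : forall x : T, (3 <= #|component e x|)%N).

Definition good (h : rel T) (S : {set T}) (f : {set T} -> G) :=
  [/\ forall x y, h x y -> e x y, symmetric h,
      forall x y, h x y -> x \in S,
      forall x y, h x y -> f [set x; y] != 0
    & (forall x y, x \in S -> y \in S -> wdeg h f x = wdeg h f y -> x = y) /\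
      (forall x, x \in S -> wdeg h f x != 0)].

Definition meas (h : rel T) := #|[set p : T * T | e p.1 p.2 && ~~ h p.1 p.2]|.

Lemma meas_add (h : rel T) u v : e u v -> ~~ h u v -> (meas (add_rel h u v) < meas h)%N.
Proof.
move=> euv nh; apply: proper_card; apply/properP; split.
  apply/subsetP => [[x y]]; rewrite !inE /add_rel /= => /andP[->].
  by rewrite !negb_or => /andP[/andP[-> _] _].
by exists (u, v); rewrite !inE /= ?euv ?nh // /add_rel !eqxx /= orbT.
Qed.

Lemma add_sub (h : rel T) u v : (forall x y, h x y -> e x y) -> e u v ->
  forall x y, add_rel h u v x y -> e x y.
Proof.
move=> hsub euv x y; rewrite /add_rel.
case/orP => [/orP[/hsub //|/andP[/eqP -> /eqP ->]]|/andP[/eqP -> /eqP ->]] //.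
by rewrite esym.
Qed.

Lemma add_sym (h : rel T) u v : symmetric h -> symmetric (add_rel h u v).
Proof.
move=> hs x y; rewrite /add_rel hs.
by case: (x == u); case: (x == v); case: (y == u); case: (y == v);
  rewrite ?orbT ?orbF ?andbT ?andbF.
Qed.

Lemma add_in (h : rel T) (S : {set T}) u v : (forall x y, h x y -> x \in S) ->
  forall x y, add_rel h u v x y -> x \in S :|: [set u; v].
Proof.
move=> hin x y; rewrite /add_rel !inE.
case/orP => [/orP[/hin -> //|/andP[/eqP -> _]]|/andP[/eqP -> _]];
  by rewrite eqxx ?orbT.
Qed.

Lemma add_lab (h : rel T) (f : {set T} -> G) u v t : ~~ h u v -> t != 0 ->
  (forall x y, h x y -> f [set x; y] != 0) ->
  forall x y, add_rel h u v x y -> upd f u v t [set x; y] != 0.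
Proof.
move=> nh t0 hf x y; rewrite /add_rel /upd; case: ifP => [_|/eqP ne] //.
case/orP => [/orP[/hf //|/andP[/eqP Ex /eqP Ey]]|/andP[/eqP Ex /eqP Ey]];
  exfalso; apply: ne; subst => //; exact: setUC.
Qed.

Lemma wdeg_out (h : rel T) (S : {set T}) (f : {set T} -> G) z :
  (forall x y, h x y -> x \in S) -> z \notin S -> wdeg h f z = 0.
Proof.
move=> hin zS; rewrite /wdeg big_pred0 // => y; apply/negbTE.
by apply: contra zS; exact: hin.
Qed.

Lemma irr_of (h : rel T) : (forall x y, h x y -> e x y) -> forall x y, h x y -> x != y.
Proof. by move=> hsub x y /hsub; apply: contraTneq => ->; rewrite eirr. Qed.

Lemma case1 (h : rel T) (S : {set T}) (f : {set T} -> G) u v : good h S f -> e u v -> ~~ h u v -> (u \in S) || (v \in S) ->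
  exists h' S' f', good h' S' f' /\ (meas h' < meas h)%N.
Proof.
case=> hsub hs hin hlab [hinj hnz] euv nh uvS.
have uv : u != v by apply: contraTneq euv => ->; rewrite eirr.
have hirr := irr_of hsub.
set w := wdeg h f.
have wout z : z \notin S -> w z = 0 by apply: wdeg_out.
have wuv : w u != w v.
  case uS: (u \in S); case vS: (v \in S).
  - by apply: contra uv => /eqP E; apply/eqP; exact: hinj.
  - by rewrite (wout v) ?vS //; exact: hnz.
  - by rewrite (wout u) ?uS // eq_sym; exact: hnz.
  - by rewrite uS vS in uvS.
have n0 : (0 < #|T|)%N by apply/card_gt0P; exists u.
have [t ht] : exists t, t \notin Bset w u v.
  apply: exists_notin; apply: (leq_ltn_trans (Bset_card w uv)); lia.
have [t0 _ _ _ _] := notinB ht.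
exists (add_rel h u v), (S :|: [set u; v]), (upd f u v t); split; last exact: meas_add.
have W z : wdeg (add_rel h u v) (upd f u v t) z
          = w z + (if (z == u) || (z == v) then t else 0).
  exact: wdeg_add.
have inS x : x \in S :|: [set u; v] -> x != u -> x != v -> x \in S.
  by rewrite !inE => /orP[//|/orP[/eqP->|/eqP->]]; rewrite eqxx.
have := step_ok (S := S :|: [set u; v]) uv wuv _ _ ht.
case.
- by move=> x y xS yS xu xv yu yv; apply: hinj; [exact: inS | exact: inS].
- by move=> x xS xu xv; apply: hnz; exact: inS.
move=> Hi Hn; split.
- exact: add_sub.
- exact: add_sym.
- exact: add_in.
- exact: add_lab.
split.
- by move=> x y xS yS; rewrite !W; exact: Hi.
- by move=> x xS; rewrite W; exact: Hn.
Qed.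


Lemma caseP3 (h : rel T) (S : {set T}) (f : {set T} -> G) a b c :
  good h S f -> e b a -> e b c -> a != c ->
  a \notin S -> b \notin S -> c \notin S ->
  exists h' S' f', good h' S' f' /\ (meas h' < meas h)%N.
Proof.
case=> hsub hs hin hlab [hinj hnz] eba ebc ac aS bS cS.
have ba : b != a by apply: contraTneq eba => ->; rewrite eirr.
have bc : b != c by apply: contraTneq ebc => ->; rewrite eirr.
have hirr := irr_of hsub.
set w := wdeg h f.
have wout z : z \notin S -> w z = 0 by apply: wdeg_out.
have nh1 : ~~ h b a by apply: contra bS; exact: hin.
have n2 : (2 <= #|T|)%N.
  by move: (cardsC [set b; a]); rewrite cards2 ba; lia.
have [t1 ht1] : exists t, t \notin [set 0] :|: [set w z | z in [set: T]].
  apply: exists_notin; apply: (leq_ltn_trans (cardU_le _ _)).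
  rewrite cards1; have := leq_imset_card w [set: T]; rewrite cardsT; move=> H; apply: (leq_ltn_trans (leq_add (leqnn 1) H)); lia.
have t10 : t1 != 0 by apply: contra ht1 => /eqP ->; rewrite !inE eqxx.
have t1w z : t1 != w z.
  by apply: contra ht1 => /eqP ->; rewrite !inE; apply/orP; right; apply: imset_f.
set h1 := add_rel h b a; set f1 := upd f b a t1.
have W1 z : wdeg h1 f1 z = w z + (if (z == b) || (z == a) then t1 else 0).
  exact: wdeg_add.
have hsub1 : forall x y, h1 x y -> e x y by exact: add_sub.
have hs1 : symmetric h1 by exact: add_sym.
have hirr1 := irr_of hsub1.
have nh2 : ~~ h1 b c.
  rewrite /h1 /add_rel !negb_or eqxx (negbTE ba) /= andbT.
  by rewrite (eq_sym c) (negbTE ac) andbT; apply: contra bS; exact: hin.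
set w1 := wdeg h1 f1.
have [t2 ht2] : exists t, t \notin Bset w1 b c.
  apply: exists_notin; apply: (leq_ltn_trans (Bset_card w1 bc)); lia.
have [t20 _ _ _ _] := notinB ht2.
exists (add_rel h1 b c), (S :|: [set b; a] :|: [set b; c]), (upd f1 b c t2).
split; last first.
  apply: (leq_trans (meas_add ebc nh2)); apply: ltnW; exact: meas_add.
have W2 z : wdeg (add_rel h1 b c) (upd f1 b c t2) z
          = w1 z + (if (z == b) || (z == c) then t2 else 0).
  exact: wdeg_add.
have cls x : x \in S :|: [set b; a] :|: [set b; c] -> x != b -> x != c ->
    (x \in S /\ w1 x = w x) \/ (x = a /\ w1 x = t1).
  move=> xS xb xc; rewrite /w1 W1.
  move: xS; rewrite !inE (negbTE xb) (negbTE xc) /= orbF.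
  case/orP => [xS|/eqP xa].
    left; split => //.
    have xa : x != a by apply: contraTneq xS => ->.
    by rewrite (negbTE xa) addr0.
  by right; subst; rewrite eqxx wout // add0r.
have wbc : w1 b != w1 c.
  rewrite /w1 !W1 eqxx /= (eq_sym c) (negbTE bc) (eq_sym c a) (negbTE ac).
  by rewrite (wout b) // (wout c) // add0r addr0.
have := step_ok (S := S :|: [set b; a] :|: [set b; c]) bc wbc _ _ ht2.
case.
- move=> x y xS yS xb xc yb yc.
  case: (cls x xS xb xc) => [[xS' ->]|[-> ->]];
    case: (cls y yS yb yc) => [[yS' ->]|[-> ->]] //.
  + exact: hinj.
  + by move=> E; move: (t1w x); rewrite E eqxx.
  + by move=> E; move: (t1w y); rewrite E eqxx.
- move=> x xS xb xc.
  by case: (cls x xS xb xc) => [[xS' ->]|[-> ->]] //; exact: hnz.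
move=> Hi Hn; split.
- exact: add_sub.
- exact: add_sym.
- by move=> x y /(add_in (add_in hin)); rewrite setUA.
- apply: add_lab => //; exact: add_lab.
split.
- by move=> x y xS yS; rewrite !W2; exact: Hi.
- by move=> x xS; rewrite W2; exact: Hn.
Qed.


Lemma step (h : rel T) (S : {set T}) (f : {set T} -> G) x y :
  good h S f -> e x y -> ~~ h x y ->
  exists h' S' f', good h' S' f' /\ (meas h' < meas h)%N.
Proof.
move=> hg exy nxy.
case: (pickP [pred p : T * T | e p.1 p.2 && ~~ h p.1 p.2 &&
                               ((p.1 \in S) || (p.2 \in S))]).
  move=> [u v] /= /andP[/andP[euv nuv] uvS]. exact (case1 hg euv nuv uvS).
move=> H.
have [hsub hs hin _ _] := hg.
have clo z w : z \notin S -> e z w -> w \notin S.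
  move=> zS ezw; have nzw : ~~ h z w by apply: contra zS; exact: hin.
  by move: (H (z, w)) => /=; rewrite ezw nzw (negbTE zS) /= => /negbT.
have xS : x \notin S.
  by move: (H (x, y)) => /=; rewrite exy nxy /= => /negbT; rewrite negb_or => /andP[].
have yS := clo x y xS exy.
case: (pickP [pred c | e x c && (c != y)]).
  move=> c /= /andP[exc cy].
  apply: (caseP3 (S := S) (f := f) (a := y) (b := x) (c := c)) => //.
    by rewrite eq_sym.
  exact: clo exc.
move=> Hx.
case: (pickP [pred c | e y c && (c != x)]).
  move=> c /= /andP[eyc cx].
  apply: (caseP3 (S := S) (f := f) (a := x) (b := y) (c := c)) => //.
    by rewrite esym.
    by rewrite eq_sym.
  exact: clo eyc.
move=> Hy.
have nx q : e x q -> q = y.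
  by move=> exq; move: (Hx q) => /=; rewrite exq /= => /negbFE/eqP.
have ny q : e y q -> q = x.
  by move=> eyq; move: (Hy q) => /=; rewrite eyq /= => /negbFE/eqP.
have cl : closed e [set x; y].
  move=> p q epq; rewrite !inE.
  case: (eqVneq p x) => [E|px].
    by subst; rewrite (nx q epq) eqxx orbT.
  case: (eqVneq p y) => [E|py].
    by subst; rewrite (ny q epq) eqxx.
  case: (eqVneq q x) => [E|qx].
    by subst; rewrite esym in epq; move: (nx p epq) => E; rewrite E eqxx in py.
  case: (eqVneq q y) => [E|qy] //.
  by subst; rewrite esym in epq; move: (ny p epq) => E; rewrite E eqxx in px.
have sub : component e x \subset [set x; y].
  apply/subsetP => z; rewrite inE => cz.
  by rewrite -(closed_connect cl cz) !inE eqxx.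
have := subset_leq_card sub; have := Hcomp x.
have : (#|[set x; y]| <= 2)%N by rewrite cards2; case: (_ != _).
lia.
Qed.

Lemma main_ind m : forall (h : rel T) S f, (meas h <= m)%N -> good h S f ->
  exists h' S' f', good h' S' f' /\ (forall x y, h' x y = e x y).
Proof.
elim: m => [|m IH] h S f hm hg.
  case: (pickP [pred p : T * T | e p.1 p.2 && ~~ h p.1 p.2]).
    move=> [x y] /= exy.
    have : (0 < meas h)%N by apply/card_gt0P; exists (x, y); rewrite inE.
    lia.
  move=> H; exists h, S, f; split => // x y.
  have [hsub _ _ _ _] := hg.
  apply/idP/idP; first exact: hsub.
  by move=> exy; move: (H (x, y)) => /=; rewrite exy /= => /negbFE.
case: (pickP [pred p : T * T | e p.1 p.2 && ~~ h p.1 p.2]).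
  move=> [x y] /= /andP[exy nxy].
  have [h' [S' [f' [hg' hlt]]]] := step hg exy nxy.
  apply: (IH h' S' f') => //; lia.
move=> H; exists h, S, f; split => // x y.
have [hsub _ _ _ _] := hg.
apply/idP/idP; first exact: hsub.
by move=> exy; move: (H (x, y)) => /=; rewrite exy /= => /negbFE.
Qed.

End Main.

Unset Implicit Arguments.

Theorem theorem3 (T : finType) (e : rel T) (G : finZmodType) :
  simple_graph e ->
  (forall x : T, 3 <= #|component e x|)%N ->
  (2 * #|T| <= #|G|)%N ->
  exists f : {set T} -> G,
    [/\ forall u v : T, e u v -> f [set u; v] != 0,
        injective (wdeg e f)
      & forall v : T, wdeg e f v != 0].
Proof.
move=> [eirr esym] Hcomp HG.
pose h0 : rel T := fun _ _ => false.
have g0 : good e h0 set0 (fun _ => 0 : G).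
  by split => //; split => x; rewrite inE.
have [h [S [f [[hsub hs hin hlab [hinj hnz]] he]]]] :=
  main_ind eirr esym HG Hcomp (leqnn _) g0.
have WE z : wdeg e f z = wdeg h f z.
  by rewrite /wdeg; apply: eq_bigl => y; rewrite he.
have inS v : v \in S.
  case: (pickP (e v)) => [y evy|Hv].
    by apply: (hin v y); rewrite he.
  have cl : closed e [set v].
    move=> p q epq; rewrite !inE.
    case: (eqVneq p v) => [E|pv].
      by subst; move: (Hv q); rewrite /= epq.
    case: (eqVneq q v) => [E|qv] //.
    by subst; rewrite esym in epq; move: (Hv p); rewrite /= epq.
  have sub : component e v \subset [set v].
    apply/subsetP => z cz; rewrite /component inE in cz.
    by rewrite -(closed_connect cl cz) !inE eqxx.
  have := subset_leq_card sub; have := Hcomp v; rewrite cards1; lia.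
exists f; split.
- by move=> u v euv; apply: hlab; rewrite he.
- by move=> x y; rewrite !WE; apply: hinj.
- by move=> v; rewrite WE; apply: hnz.
Qed.
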